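(* Let $\mathcal{A}s_2\langle X\rangle$ be the free second-type associative algebra on a countable set $X$ of generators over a field of characteristic $0$. Then for all elements $a,b,c,d,e\in\mathcal{A}s_2\langle X\rangle$ the following identities hold: \[ dcab = dcba + cdab - cdba + adcb - acdb, \] \[ abcde=abdce=acbde . \]
   Context: An associative algebra is called of the second type if it satisfies the identity $abc-acb-bac+bca+cab-cba=0$ for all $a,b,c$. $\mathcal{A}s_2$ denotes the variety of second-type associative algebras and $\mathcal{A}s_2\langle X\rangle$ its free algebra on the generating set $X$ (the free associative algebra on $X$ modulo the T-ideal generated by this identity). The base field has characteristic $0$. *)

(* Defs.v *)
From HB Require Import structures.
From mathcomp Require Import all_boot all_order all_algebra.
From mathcomp Require Import finmap.
From mathcomp.multinomials Require Import monalg.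
Set Implicit Arguments. Unset Strict Implicit. Unset Printing Implicit Defensive.
Import GRing.Theory.
Local Open Scope ring_scope.

(* The free unital associative algebra F<X> on the countable set X = nat of
   generators: finitely supported F-linear combinations of words
   (free monoid {fmonom nat}) with concatenation product. *)
Definition freeAs (F : fieldType) := {malg F[{fmonom nat}]}.

(* The free (non-unital) associative algebra As<X>: the elements of F<X>
   with zero constant term (coefficient of the empty word). *)
Definition nonunital (F : fieldType) (p : freeAs F) : Prop :=
  p@_(mone : {fmonom nat}) = 0.

Definition as2_poly (F : fieldType) (a b c : freeAs F) : freeAs F :=
  a * b * c - a * c * b - b * a * c + b * c * a + c * a * b - c * b * a.

(* The T-ideal of As<X> generated by as2_poly: the two-sided ideal of the
   non-unital algebra As<X> generated by all values as2_poly p q r with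
   p, q, r in As<X>; its elements are the finite sums of u * f(p,q,r) * v
   with u, v in F<X> (u, v may be scalars, covering f, u f, f v and scalar
   multiples).  This ideal is stable under all endomorphisms of As<X>,
   i.e. it is the T-ideal generated by the identity. *)
Definition as2_Tideal (F : fieldType) (x : freeAs F) : Prop :=
  exists s : seq (freeAs F * freeAs F * freeAs F * freeAs F * freeAs F),
    (forall t, t \in s -> [/\ nonunital t.1.1.1.2, nonunital t.1.1.2
                              & nonunital t.1.2]) /\
    x = \sum_(t <- s) t.1.1.1.1 * as2_poly t.1.1.1.2 t.1.1.2 t.1.2 * t.2.

Definition as2_eq (F : fieldType) (x y : freeAs F) : Prop :=
  as2_Tideal (x - y).

(* Main.v *)
Require Import Defs.
From HB Require Import structures.
From mathcomp Require Import all_boot all_order all_algebra.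
From mathcomp.multinomials Require Import monalg.
Import GRing.Theory.
Local Open Scope ring_scope.

Section NC.
Variable R : pzRingType.
Implicit Types (e : seq R) (m : seq (int * seq nat)).
Inductive rt := RV of nat | RA of rt & rt | RN of rt | R0 | R1 | RM of rt & rt | RZ of rt & int.
Fixpoint ev e t : R := match t with
  | RV i => nth 0 e i | RA a b => ev e a + ev e b | RN a => - ev e a
  | R0 => 0 | R1 => 1 | RM a b => ev e a * ev e b | RZ a n => ev e a *~ n end.
Fixpoint prodw e (w : seq nat) : R := match w with [::] => 1 | i :: w' => nth 0 e i * prodw e w' end.
Fixpoint evm e m : R := match m with [::] => 0 | x :: m' => prodw e x.2 *~ x.1 + evm e m' end.
Fixpoint mulm m1 m2 := match m1 with
  | [::] => [::]
  | x :: m1' => map (fun y => (x.1 * y.1, x.2 ++ y.2)%R) m2 ++ mulm m1' m2 end.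
Fixpoint norm t : seq (int * seq nat) := match t with
  | RV i => [:: (1, [:: i])] | RA a b => norm a ++ norm b
  | RN a => map (fun x => (- x.1, x.2)) (norm a)
  | R0 => [::] | R1 => [:: (1, [::])]
  | RM a b => mulm (norm a) (norm b)
  | RZ a n => map (fun x => (x.1 * n, x.2)) (norm a) end.

Lemma prodw_cat e w1 w2 : prodw e (w1 ++ w2) = prodw e w1 * prodw e w2.
Proof. by elim: w1 => [|i w IH] /=; rewrite ?mul1r // IH mulrA. Qed.
Lemma evm_cat e m1 m2 : evm e (m1 ++ m2) = evm e m1 + evm e m2.
Proof. by elim: m1 => [|x m IH] /=; rewrite ?add0r // IH addrA. Qed.
Lemma evm_map_mul e c w m :
  evm e (map (fun y => (c * y.1, w ++ y.2)%R) m) = (prodw e w *~ c) * evm e m.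
Proof.
elim: m => [|y m IH] /=; first by rewrite mulr0.
rewrite IH mulrDr prodw_cat; congr (_ + _).
by rewrite mulrzAl mulrzAr -mulrzA mulrC.
Qed.
Lemma evm_mulm e m1 m2 : evm e (mulm m1 m2) = evm e m1 * evm e m2.
Proof.
elim: m1 => [|x m IH] /=; first by rewrite mul0r.
by rewrite evm_cat evm_map_mul IH mulrDl.
Qed.
Lemma normP e t : ev e t = evm e (norm t).
Proof.
elim: t => [i|a IHa b IHb|a IHa|||a IHa b IHb|a IHa n] /=.
- by rewrite mulr1 mulr1z addr0.
- by rewrite evm_cat IHa IHb.
- rewrite IHa; elim: (norm a) => [|x m IH] /=; first by rewrite oppr0.
  by rewrite -IH opprD mulrNz.
- by [].
- by rewrite mulr1z addr0.
- by rewrite evm_mulm IHa IHb.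
- rewrite IHa; elim: (norm a) => [|x m IH] /=; first by rewrite mul0rz.
  by rewrite -IH mulrzDl mulrzA.
Qed.

Fixpoint coef m (w : seq nat) : int := match m with
  | [::] => 0 | x :: m' => (if x.2 == w then x.1 else 0) + coef m' w end.

Lemma evm_filter e m w :
  evm e m = prodw e w *~ coef m w + evm e (filter (fun x => x.2 != w) m).
Proof.
elim: m => [|x m IH] /=; first by rewrite mulr0z addr0.
rewrite IH; case: eqP => [->|hne] /=.
  by rewrite mulrzDr addrA.
by rewrite add0r addrCA.
Qed.
Lemma coef_filter m w w' : w' != w ->
  coef (filter (fun x => x.2 != w) m) w' = coef m w'.
Proof.
move=> hne; elim: m => [|x m IH] //=.
case: (eqVneq x.2 w) => [hx|hx] /=.
  by rewrite hx eq_sym (negbTE hne) add0r IH.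
by rewrite IH.
Qed.
Lemma evm0 e m : (forall w, w \in unzip2 m -> coef m w = 0) -> evm e m = 0.
Proof.
move: {2}(size m) (leqnn (size m)) => n; elim: n m => [|n IH] [|x m] //= hs H.
have hw : coef (x :: m) x.2 = 0 by apply: H; rewrite inE eqxx.
rewrite (evm_filter e m x.2); move: hw => /= hw; rewrite eqxx in hw.
rewrite addrA -mulrzDr hw mulr0z add0r IH //.
  by rewrite size_filter; apply: leq_trans (count_size _ _) _.
move=> w hw'; have hne : w != x.2.
  by apply/negP => /eqP E; move: hw'; rewrite E => /mapP [y]; rewrite mem_filter => /andP [/negP hy _] Ey; apply: hy; rewrite Ey.
rewrite coef_filter //.
have := H w; rewrite /= eq_sym (negbTE hne) add0r; apply.
move: hw' => /mapP [y]; rewrite mem_filter => /andP [_ hy] ->.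
by rewrite inE; apply/orP; right; apply: map_f.
Qed.

Lemma ev_eq e t1 t2 :
  let m := norm (RA t1 (RN t2)) in
  all (fun w => coef m w == 0) (undup (unzip2 m)) -> ev e t1 = ev e t2.
Proof.
move=> m /allP H; apply/eqP; rewrite -subr_eq0; apply/eqP.
have -> : ev e t1 - ev e t2 = ev e (RA t1 (RN t2)) by [].
rewrite normP; apply: evm0 => w hw; apply/eqP; apply: H; by rewrite mem_undup.
Qed.
End NC.

Ltac find x l := lazymatch l with
  | (x :: _) => constr:(0%N)
  | (_ :: ?l') => let n := find x l' in constr:(S n) end.
Ltac atoms e l := lazymatch e with
  | @GRing.add _ ?a ?b => let l1 := atoms a l in atoms b l1
  | @GRing.opp _ ?a => atoms a l
  | @GRing.zero _ => l
  | @GRing.one _ => l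
  | @GRing.mul _ ?a ?b => let l1 := atoms a l in atoms b l1
  | @intmul _ ?a _ => atoms a l
  | _ => match l with
         | context [e] => l
         | _ => constr:(e :: l) end end.
Ltac reify e l := lazymatch e with
  | @GRing.add _ ?a ?b => let x := reify a l in let y := reify b l in constr:(RA x y)
  | @GRing.opp _ ?a => let x := reify a l in constr:(RN x)
  | @GRing.zero _ => constr:(R0)
  | @GRing.one _ => constr:(R1)
  | @GRing.mul _ ?a ?b => let x := reify a l in let y := reify b l in constr:(RM x y)
  | @intmul _ ?a ?n => let x := reify a l in constr:(RZ x n)
  | _ => let i := find e l in constr:(RV i) end.
Ltac nc_solve := lazymatch goal with
  | |- @eq ?T ?L ?R =>
    let l0 := atoms L (@nil T) in let l := atoms R l0 in
    let tl := reify L l in let tr := reify R l in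
    change (@ev _ l tl = @ev _ l tr); apply: ev_eq; vm_compute; reflexivity end.

Definition s3 (R : pzRingType) (a b c : R) : R :=
  a * b * c - a * c * b - b * a * c + b * c * a + c * a * b - c * b * a.
Arguments s3 {R}.

Definition L1 (R : pzRingType) (a b c d : R) : seq (int * R * R * R * R * R) :=
  [:: ((1%:Z), 1, (a), (b), (c), d);
  ((- 2%:Z), 1, (a), (b), (c * d), 1);
  ((1%:Z), 1, (a), (b * c), (d), 1);
  ((- 1%:Z), 1, (a), (b), (d), c);
  ((2%:Z), 1, (a), (b), (d * c), 1);
  ((- 1%:Z), 1, (a), (b * d), (c), 1);
  ((- 1%:Z), 1, (b * a), (c), (d), 1);
  ((1%:Z), 1, (b), (c), (d), a)].
Arguments L1 {R}.
Lemma r1 (R : pzRingType) (a b c d : R) :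
  (d * c * a * b - (d * c * b * a + c * d * a * b - c * d * b * a + a * d * c * b - a * c * d * b)) *~ 2 = \sum_(t <- L1 a b c d) (t.1.1.1.1.2 * s3 t.1.1.1.2 t.1.1.2 t.1.2 * t.2) *~ t.1.1.1.1.1.
Proof.
rewrite /L1 !big_cons big_nil /s3 /=.
nc_solve.
Qed.

Definition L2 (R : pzRingType) (a b c d e : R) : seq (int * R * R * R * R * R) :=
  [:: ((- 5%:Z), 1, (a), (b), (c), d * e);
  ((- 4%:Z), 1, (a * b), (c), (d), e);
  ((- 1%:Z), 1, (a * b * c), (d), (e), 1);
  ((8%:Z), a, (b), (c), (d), e);
  ((- 3%:Z), a, (b), (c), (d * e), 1);
  ((7%:Z), a, (b), (c * d), (e), 1);
  ((2%:Z), a, (b * c), (d), (e), 1);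
  ((8%:Z), a * b, (c), (d), (e), 1);
  ((6%:Z), 1, (a), (b), (c * e), d);
  ((- 3%:Z), 1, (a * b), (c), (e), d);
  ((2%:Z), 1, (a * b), (c), (e * d), 1);
  ((2%:Z), 1, (a * b), (c * e), (d), 1);
  ((- 5%:Z), a, (b), (c), (e), d);
  ((6%:Z), a, (b), (c), (e * d), 1);
  ((1%:Z), a, (b), (c * e), (d), 1);
  ((1%:Z), 1, (a), (b), (d), c * e);
  ((- 1%:Z), 1, (a * b * d), (c), (e), 1);
  ((- 5%:Z), a, (b), (d * c), (e), 1);
  ((8%:Z), a, (b * d), (c), (e), 1);
  ((- 2%:Z), 1, (a), (b), (d), e * c);
  ((2%:Z), 1, (a), (b), (d * e), c);
  ((- 2%:Z), 1, (a), (b * d), (e), c);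
  ((- 1%:Z), 1, (a * b), (d), (e), c);
  ((- 1%:Z), a, (b), (d), (e), c);
  ((4%:Z), 1, (a), (b), (e), c * d);
  ((- 4%:Z), 1, (a), (b), (e * c), d);
  ((1%:Z), 1, (a * b * e), (c), (d), 1);
  ((- 10%:Z), a, (b * e), (c), (d), 1);
  ((4%:Z), 1, (a), (b), (e), d * c);
  ((- 4%:Z), 1, (a), (b), (e * d), c);
  ((3%:Z), 1, (a * c), (b), (d), e);
  ((- 2%:Z), 1, (a * c), (b), (d * e), 1);
  ((2%:Z), 1, (a * c), (b * d), (e), 1);
  ((6%:Z), 1, (a * c * b), (d), (e), 1);
  ((- 1%:Z), a, (c * b), (d), (e), 1);
  ((- 8%:Z), 1, (a * c), (b), (e), d);
  ((4%:Z), 1, (a * c), (b), (e * d), 1);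
  ((3%:Z), 1, (a), (c), (d), b * e);
  ((- 2%:Z), 1, (a * c), (d * b), (e), 1);
  ((4%:Z), 1, (a * c * d), (b), (e), 1);
  ((7%:Z), a, (c), (d * b), (e), 1);
  ((- 4%:Z), 1, (a * c), (d), (e), b);
  ((2%:Z), a, (c), (d), (e), b);
  ((- 2%:Z), 1, (a * c * e), (b), (d), 1);
  ((2%:Z), 1, (a), (c), (e), d * b);
  ((- 2%:Z), 1, (a), (c), (e * d), b);
  ((- 2%:Z), 1, (a), (c * e), (d), b);
  ((5%:Z), 1, (a * d), (b), (c), e);
  ((- 6%:Z), 1, (a * d), (b), (c * e), 1);
  ((2%:Z), 1, (a * d * b), (c), (e), 1);
  ((2%:Z), 1, (a), (d * b), (e), c);
  ((- 4%:Z), 1, (a * d), (b), (e), c);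
  ((4%:Z), 1, (a * d), (b), (e * c), 1)].
Arguments L2 {R}.
Lemma r2 (R : pzRingType) (a b c d e : R) :
  (a * b * c * d * e - a * b * d * c * e) *~ 12 = \sum_(t <- L2 a b c d e) (t.1.1.1.1.2 * s3 t.1.1.1.2 t.1.1.2 t.1.2 * t.2) *~ t.1.1.1.1.1.
Proof.
rewrite /L2 !big_cons big_nil /s3 /=.
nc_solve.
Qed.

Definition L3 (R : pzRingType) (a b c d e : R) : seq (int * R * R * R * R * R) :=
  [:: ((8%:Z), 1, (a), (b), (c), d * e);
  ((6%:Z), 1, (a), (b), (c * d), e);
  ((- 6%:Z), 1, (a), (b * c), (d), e);
  ((4%:Z), 1, (a * b), (c), (d), e);
  ((- 3%:Z), 1, (a * b), (c), (d * e), 1);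
  ((3%:Z), 1, (a * b), (c * d), (e), 1);
  ((10%:Z), 1, (a * b * c), (d), (e), 1);
  ((- 17%:Z), a, (b), (c), (d), e);
  ((21%:Z), a, (b), (c), (d * e), 1);
  ((- 13%:Z), a, (b), (c * d), (e), 1);
  ((- 17%:Z), a, (b * c), (d), (e), 1);
  ((4%:Z), a * b, (c), (d), (e), 1);
  ((- 12%:Z), 1, (a), (b), (c), e * d);
  ((3%:Z), 1, (a), (b), (c * e), d);
  ((- 3%:Z), 1, (a), (b * c), (e), d);
  ((- 9%:Z), 1, (a), (b * c), (e * d), 1);
  ((9%:Z), 1, (a), (b * c * e), (d), 1);
  ((- 3%:Z), 1, (a * b), (c), (e), d);
  ((1%:Z), 1, (a * b), (c), (e * d), 1);
  ((4%:Z), 1, (a * b), (c * e), (d), 1);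
  ((20%:Z), a, (b), (c), (e), d);
  ((- 15%:Z), a, (b), (c), (e * d), 1);
  ((2%:Z), a, (b), (c * e), (d), 1);
  ((- 1%:Z), 1, (a), (b), (d), c * e);
  ((3%:Z), 1, (a), (b), (d * c), e);
  ((3%:Z), 1, (a), (b), (d * c * e), 1);
  ((- 3%:Z), 1, (a), (b * d), (c * e), 1);
  ((7%:Z), 1, (a * b * d), (c), (e), 1);
  ((5%:Z), a, (b), (d * c), (e), 1);
  ((- 11%:Z), a, (b * d), (c), (e), 1);
  ((8%:Z), 1, (a), (b), (d), e * c);
  ((- 5%:Z), 1, (a), (b), (d * e), c);
  ((- 3%:Z), 1, (a), (b), (d * e * c), 1);
  ((8%:Z), 1, (a), (b * d), (e), c);
  ((3%:Z), 1, (a), (b * d * e), (c), 1);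
  ((- 2%:Z), 1, (a * b), (d), (e), c);
  ((1%:Z), a, (b), (d), (e), c);
  ((- 7%:Z), 1, (a), (b), (e), c * d);
  ((4%:Z), 1, (a), (b), (e * c), d);
  ((3%:Z), 1, (a), (b), (e * c * d), 1);
  ((3%:Z), 1, (a), (b * e), (c), d);
  ((- 3%:Z), 1, (a), (b * e), (c * d), 1);
  ((- 4%:Z), 1, (a * b * e), (c), (d), 1);
  ((7%:Z), a, (b * e), (c), (d), 1);
  ((- 13%:Z), 1, (a), (b), (e), d * c);
  ((16%:Z), 1, (a), (b), (e * d), c);
  ((- 3%:Z), 1, (a), (b), (e * d * c), 1);
  ((- 6%:Z), 1, (a), (b * e), (d), c);
  ((3%:Z), 1, (a), (b * e * d), (c), 1);
  ((3%:Z), 1, (a), (c * b), (d * e), 1);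
  ((- 12%:Z), 1, (a * c), (b), (d), e);
  ((8%:Z), 1, (a * c), (b), (d * e), 1);
  ((- 8%:Z), 1, (a * c), (b * d), (e), 1);
  ((- 9%:Z), 1, (a * c * b), (d), (e), 1);
  ((16%:Z), a, (c * b), (d), (e), 1);
  ((3%:Z), 1, (a), (c * b), (e), d);
  ((3%:Z), 1, (a), (c * b), (e * d), 1);
  ((14%:Z), 1, (a * c), (b), (e), d);
  ((- 10%:Z), 1, (a * c), (b), (e * d), 1);
  ((3%:Z), 1, (a * c), (b * e), (d), 1);
  ((- 3%:Z), 1, (a), (c * d * b), (e), 1);
  ((5%:Z), 1, (a * c), (d * b), (e), 1);
  ((- 4%:Z), 1, (a * c * d), (b), (e), 1);
  ((- 7%:Z), a, (c), (d * b), (e), 1);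
  ((- 2%:Z), 1, (a * c), (d), (e), b);
  ((- 2%:Z), a, (c), (d), (e), b);
  ((- 3%:Z), 1, (a), (c * e * b), (d), 1);
  ((2%:Z), 1, (a * c * e), (b), (d), 1);
  ((4%:Z), 1, (a), (c), (e), d * b);
  ((- 4%:Z), 1, (a), (c), (e * d), b);
  ((- 1%:Z), 1, (a), (c * e), (d), b);
  ((9%:Z), 1, (a), (d * b * c), (e), 1);
  ((- 14%:Z), 1, (a * d), (b), (c), e);
  ((6%:Z), 1, (a * d), (b), (c * e), 1);
  ((3%:Z), 1, (a * d), (b * c), (e), 1);
  ((- 11%:Z), 1, (a * d * b), (c), (e), 1);
  ((- 8%:Z), 1, (a), (d * b), (e), c);
  ((7%:Z), 1, (a * d), (b), (e), c);
  ((- 7%:Z), 1, (a * d), (b), (e * c), 1);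
  ((3%:Z), 1, (b * a), (c), (d), e);
  ((3%:Z), 1, (b * a * c), (d), (e), 1);
  ((6%:Z), 1, (b * a), (c), (e * d), 1);
  ((- 6%:Z), 1, (b * a), (c * e), (d), 1);
  ((- 6%:Z), 1, (b * a), (d * c), (e), 1);
  ((3%:Z), 1, (b), (c * a), (d), e)].
Arguments L3 {R}.
Lemma r3 (R : pzRingType) (a b c d e : R) :
  (a * b * d * c * e - a * c * b * d * e) *~ 6 = \sum_(t <- L3 a b c d e) (t.1.1.1.1.2 * s3 t.1.1.1.2 t.1.1.2 t.1.2 * t.2) *~ t.1.1.1.1.1.
Proof.
rewrite /L3 !big_cons big_nil /s3 /=.
nc_solve.
Qed.

Lemma nonunitalM (F : fieldType) (x y : freeAs F) :
  nonunital x -> nonunital y -> nonunital (x * y).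
Proof.
rewrite /nonunital => hx hy.
have [h1 h2] := @mcoeff1g_is_multiplicative {fmonom nat} F.
by rewrite h1 hx mul0r.
Qed.

Definition tup (F : fieldType) := (int * freeAs F * freeAs F * freeAs F * freeAs F * freeAs F)%type.
Fixpoint allnu (F : fieldType) (l : seq (tup F)) : Prop := match l with
  | [::] => True
  | t :: l' => [/\ nonunital t.1.1.1.2, nonunital t.1.1.2 & nonunital t.1.2] /\ allnu F l' end.
Arguments allnu {F}.

Lemma as2_from (F : fieldType) (x y : freeAs F) (N : nat) (l : seq (tup F)) :
  N%:R != 0 :> F -> allnu l ->
  (x - y) *~ N = \sum_(t <- l) (t.1.1.1.1.2 * s3 t.1.1.1.2 t.1.1.2 t.1.2 * t.2) *~ t.1.1.1.1.1 ->
  as2_eq x y.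
Proof.
move=> hN hl hE.
exists [seq (((t.1.1.1.1.1%:~R / N%:R) *: t.1.1.1.1.2, t.1.1.1.2, t.1.1.2, t.1.2, t.2)) | t <- l].
split.
  move=> t /mapP [t' ht' ->] /=.
  elim: l hl ht' {hE} => // t0 l IH [h0 hl]; rewrite inE => /orP [/eqP -> // | ht].
  exact: IH.
rewrite big_map.
have -> : x - y = (N%:R^-1 : F) *: ((x - y) *~ N).
  by rewrite -scaler_int scalerA mulVf // scale1r.
rewrite hE scaler_sumr; apply: eq_bigr => t _.
by rewrite -!scalerAl -scaler_int scalerA mulrC.
Qed.

Theorem mainTheorem1 (F : fieldType) (charF0 : [pchar F] =i pred0)
  (a b c d e : freeAs F) :
  nonunital a -> nonunital b -> nonunital c -> nonunital d -> nonunital e ->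
  [/\ as2_eq (d * c * a * b)
        (d * c * b * a + c * d * a * b - c * d * b * a + a * d * c * b
         - a * c * d * b),
      as2_eq (a * b * c * d * e) (a * b * d * c * e)
    & as2_eq (a * b * d * c * e) (a * c * b * d * e)].
Proof.
move=> ha hb hc hd he.
have hch : forall n : nat, (n%:R == 0 :> F) = (n == 0%N) by apply/pcharf0P.
split.
- apply: (@as2_from F _ _ 2 (L1 a b c d)); first by rewrite hch.
    by rewrite /L1 /=; repeat split; repeat apply: nonunitalM.
  exact: r1.
- apply: (@as2_from F _ _ 12 (L2 a b c d e)); first by rewrite hch.
    by rewrite /L2 /=; repeat split; repeat apply: nonunitalM.
  exact: r2.
- apply: (@as2_from F _ _ 6 (L3 a b c d e)); first by rewrite hch.
    by rewrite /L3 /=; repeat split; repeat apply: nonunitalM.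
  exact: r3.
Qed.
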